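(* Let $N$ be a positive integer, $L>0$, and $\zeta=(\zeta_0,\dots,\zeta_{N+2})\in\mathbb{R}^{N+3}$ with $\zeta_0>\zeta_1>\dots>\zeta_{N+1}>\zeta_{N+2}=0$. With $x_i,g_i,f_i$ and $W^\zeta$ as defined in the context, the function $W^\zeta:\mathbb{R}^{N+1}\to\mathbb{R}$ is convex and has a Lipschitz-continuous gradient with constant $L$, and $W^\zeta(x_i)=f_i$, $\nabla W^\zeta(x_i)=g_i$ for all $i\in\{0,\dots,N+1\}$.
   Context: Let $e_0,\dots,e_N$ denote the standard unit vectors of $\mathbb{R}^{N+1}$ (zero-based indexing). Define for $i=0,\dots,N+1$: $x_i=-\sum_{j=0}^{i-1}\frac{\zeta_j-\zeta_{i+1}}{\sqrt{\zeta_j-\zeta_{j+1}}}e_j\in\mathbb{R}^{N+1}$; $g_i=L\sqrt{\zeta_i-\zeta_{i+1}}\,e_i$ for $i=0,\dots,N$ and $g_{N+1}=0$; $f_i=\frac L2(\zeta_i+\zeta_{i+1})$ for $i=0,\dots,N$ and $f_{N+1}=0$. For $y\in\mathbb{R}^{N+1}$, $\nu\in\mathbb{R}^{N+1}$, $\alpha=(\alpha_0,\dots,\alpha_{N+1})\in\mathbb{R}^{N+2}$ let $w^\zeta(y,\nu,\alpha)=\frac L2\|y+\nu-\sum_{i=0}^{N+1}\alpha_i(x_i-\frac1Lg_i)\|^2+\sum_{i=0}^{N+1}\alpha_i(f_i-\frac1{2L}\|g_i\|^2)$, and $W^\zeta(y)=\min\{w^\zeta(y,\nu,\alpha):\nu\in\mathbb{R}^{N+1}_+,\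 \alpha\in\Delta_{N+2}\}$, where $\mathbb{R}^{N+1}_+$ is the nonnegative orthant and $\Delta_{N+2}=\{\alpha\in\mathbb{R}^{N+2}:\alpha_i\geq0,\ \sum_i\alpha_i=1\}$. *)

(* Defs.v *)
From HB Require Import structures.
From mathcomp Require Import all_boot all_order all_algebra.
From mathcomp Require Import all_classical all_reals all_analysis.
Set Implicit Arguments. Unset Strict Implicit. Unset Printing Implicit Defensive.
Import Order.TTheory GRing.Theory Num.Theory.
Import numFieldNormedType.Exports.
Local Open Scope classical_set_scope.
Local Open Scope ring_scope.

Section Defs.
Variable R : realType.

Definition dotv (n : nat) (u v : 'rV[R]_n) : R := \sum_(j < n) u 0 j * v 0 j.
Definition enorm (n : nat) (u : 'rV[R]_n) : R := Num.sqrt (dotv u u).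

(* x_i, g_i, f_i for i = 0..N+1; zeta : nat -> R gives zeta_0..zeta_{N+2} *)
Definition xpt (N : nat) (zeta : nat -> R) (i : nat) : 'rV[R]_N.+1 :=
  \row_(j < N.+1) (if (j < i)%N then
       - ((zeta j - zeta i.+1) / Num.sqrt (zeta j - zeta j.+1)) else 0).

Definition gpt (N : nat) (L : R) (zeta : nat -> R) (i : nat) : 'rV[R]_N.+1 :=
  \row_(j < N.+1) (if (i <= N)%N && (j == i :> nat)
                   then L * Num.sqrt (zeta i - zeta i.+1) else 0).

Definition fval (N : nat) (L : R) (zeta : nat -> R) (i : nat) : R :=
  if (i <= N)%N then L / 2 * (zeta i + zeta i.+1) else 0.

Definition wfun (N : nat) (L : R) (zeta : nat -> R)
    (y nu : 'rV[R]_N.+1) (alpha : 'rV[R]_N.+2) : R :=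
  let v := y + nu - \sum_(i < N.+2) alpha 0 i *: (xpt N zeta i - L^-1 *: gpt N L zeta i) in
  L / 2 * dotv v v
  + \sum_(i < N.+2) alpha 0 i * (fval N L zeta i - (2 * L)^-1 * dotv (gpt N L zeta i) (gpt N L zeta i)).

Definition nonneg_orthant (n : nat) : set 'rV[R]_n := [set nu | forall j, 0 <= nu 0 j].
Definition simplex (n : nat) : set 'rV[R]_n :=
  [set a | (forall i, 0 <= a 0 i) /\ \sum_(i < n) a 0 i = 1].

(* W^zeta(y) = min over the feasible set; rendered as the infimum of the values
   (the minimum is attained, so min = inf). *)
Definition Wfun (N : nat) (L : R) (zeta : nat -> R) (y : 'rV[R]_N.+1) : R :=
  inf [set wfun L zeta y nu alpha | nu in @nonneg_orthant N.+1 & alpha in @simplex N.+2].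

Definition is_gradient (n : nat) (F : 'rV[R]_n.+1 -> R) (y g : 'rV[R]_n.+1) : Prop :=
  differentiable F y /\ forall h, 'd F y h = dotv g h.

Definition convexf (n : nat) (F : 'rV[R]_n -> R) : Prop :=
  forall (y z : 'rV[R]_n) (t : R), 0 <= t -> t <= 1 ->
    F (t *: y + (1 - t) *: z) <= t * F y + (1 - t) * F z.

End Defs.

(* Main.v *)
Require Import Defs.
From HB Require Import structures.
From mathcomp Require Import all_boot all_order all_algebra.
From mathcomp Require Import all_classical all_reals all_analysis.
From mathcomp Require Import ring lra zify.
Set Implicit Arguments. Unset Strict Implicit. Unset Printing Implicit Defensive.
Import Order.TTheory GRing.Theory Num.Theory.
Import numFieldNormedType.Exports.
Local Open Scope classical_set_scope.
Local Open Scope ring_scope.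

Section Dot.
Variable R : realType.
Variable n : nat.
Implicit Types u v w : 'rV[R]_n.

Lemma dotvC u v : dotv u v = dotv v u.
Proof. by rewrite /dotv; apply: eq_bigr => j _; rewrite mulrC. Qed.
Lemma dotvDl u v w : dotv (u + v) w = dotv u w + dotv v w.
Proof. by rewrite /dotv -big_split; apply: eq_bigr => j _; rewrite mxE mulrDl. Qed.
Lemma dotvDr u v w : dotv w (u + v) = dotv w u + dotv w v.
Proof. by rewrite dotvC dotvDl !(dotvC w). Qed.
Lemma dotvBl u v w : dotv (u - v) w = dotv u w - dotv v w.
Proof. by rewrite /dotv -sumrB; apply: eq_bigr => j _; rewrite !mxE mulrBl. Qed.
Lemma dotvBr u v w : dotv w (u - v) = dotv w u - dotv w v.
Proof. by rewrite dotvC dotvBl !(dotvC w). Qed.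
Lemma dotvZl k u v : dotv (k *: u) v = k * dotv u v.
Proof. by rewrite /dotv mulr_sumr; apply: eq_bigr => j _; rewrite mxE mulrA. Qed.
Lemma dotvZr k u v : dotv v (k *: u) = k * dotv v u.
Proof. by rewrite dotvC dotvZl dotvC. Qed.
Lemma dotvNl u v : dotv (- u) v = - dotv u v.
Proof. by rewrite -scaleN1r dotvZl mulN1r. Qed.
Lemma dotv0r u : dotv u 0 = 0.
Proof. by rewrite /dotv big1 // => j _; rewrite mxE mulr0. Qed.
Lemma dotv_ge0 u : 0 <= dotv u u.
Proof. by apply: sumr_ge0 => j _; rewrite -expr2 sqr_ge0. Qed.
Lemma dotv_eq0 u : dotv u u = 0 -> u = 0.
Proof.
move=> h; apply/rowP => j; rewrite mxE.
have H : forall i : 'I_n, true -> 0 <= u 0 i * u 0 i.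
  by move=> i _; rewrite -expr2 sqr_ge0.
have E := psumr_eq0P H h. have := E j. move=> /(_ isT) /eqP.
by rewrite mulf_eq0 orbb => /eqP.
Qed.
Lemma dotv_sumr I (s : seq I) (F : I -> 'rV[R]_n) v :
  dotv v (\sum_(i <- s) F i) = \sum_(i <- s) dotv v (F i).
Proof.
elim: s => [|i s IH]; first by rewrite !big_nil dotv0r.
by rewrite !big_cons dotvDr IH.
Qed.
Lemma dotv_sq_add u v : dotv (u + v) (u + v) = dotv u u + 2 * dotv u v + dotv v v.
Proof. rewrite dotvDl !dotvDr (dotvC v u); ring. Qed.
Lemma dotv_sq_sub u v : dotv (u - v) (u - v) = dotv u u - 2 * dotv u v + dotv v v.
Proof. rewrite dotvBl !dotvBr (dotvC v u); ring. Qed.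
End Dot.

Section S.
Variable R : realType.

Lemma cont_sum {T : topologicalType} (I : Type) (s : seq I) (F : I -> T -> R) :
  (forall i, continuous (F i)) -> continuous (fun x => \sum_(i <- s) F i x).
Proof.
move=> h; elim: s => [|i s IH].
  under eq_fun do rewrite big_nil. exact: cst_continuous.
under eq_fun do rewrite big_cons.
move=> x; apply: (@continuousD _ _ _ (F i) (fun x => \sum_(j <- s) F j x)).
  exact: h.
exact: IH.
Qed.

Lemma cont_mul {T : topologicalType} (f g : T -> R) :
  continuous f -> continuous g -> continuous (fun x => f x * g x).
Proof. move=> hf hg x; exact: (continuousM (hf x) (hg x)). Qed.

Lemma cont_max {T : topologicalType} (f g : T -> R) :
  continuous f -> continuous g -> continuous (fun x => Num.max (f x) (g x)).
Proof. move=> hf hg x; exact: (continuous_max (hf x) (hg x)). Qed.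

Lemma cont_add {T : topologicalType} (f g : T -> R) :
  continuous f -> continuous g -> continuous (fun x => f x + g x).
Proof. move=> hf hg x; exact: (continuousD (hf x) (hg x)). Qed.

Lemma cont_sub {T : topologicalType} (f g : T -> R) :
  continuous f -> continuous g -> continuous (fun x => f x - g x).
Proof. move=> hf hg x; exact: (continuousB (hf x) (hg x)). Qed.


Lemma simplex_closed m : closed (@simplex R m).
Proof.
have -> : @simplex R m = (\bigcap_(i in setT) ((fun a : 'rV[R]_m => a 0 i) @^-1` [set x | 0 <= x]))
   `&` ((fun a : 'rV[R]_m => \sum_(i < m) a 0 i) @^-1` [set x | x = 1]).
  apply/seteqP; split => a /=.
    by move=> [h1 h2]; split => // i _; exact: h1.
  by move=> [h1 h2]; split => // i; exact: h1.
apply: closedI.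
  apply: closed_bigI => i _; apply: preimage_closed; last exact: closed_ge.
  by move=> x _; exact: coord_continuous.
apply: preimage_closed; last exact: closed_eq.
move=> x _; apply: cont_sum => i; exact: coord_continuous.
Qed.

Lemma simplex_compact m : compact (@simplex R m).
Proof.
apply: (subclosed_compact (@simplex_closed m)
  (@rV_compact _ m (fun=> `[(0:R), 1]%classic) (fun=> @segment_compact _ 0 1))).
move=> a [h1 h2] i /=; rewrite in_itv /=; apply/andP; split.
  have -> : (ord0 : 'I_1) = 0 by apply/val_inj. exact: h1.
have -> : (ord0 : 'I_1) = 0 by apply/val_inj.
 rewrite -h2 (bigD1 i) //= lerDl; apply: sumr_ge0 => j _; exact: h1.
Qed.

Lemma min_simplex m (f : 'rV[R]_m.+1 -> R) : continuous f ->
  exists2 a, @simplex R m.+1 a & forall b, @simplex R m.+1 b -> f a <= f b.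
Proof.
move=> hf.
have ne : @simplex R m.+1 !=set0.
  exists (\row_(j < m.+1) (if j == ord0 then 1 else 0)); split.
    by move=> i; rewrite mxE; case: ifP.
  rewrite (bigD1 ord0) //= mxE eqxx big1 ?addr0 // => j hj; rewrite mxE (negbTE hj) //.
have [a ha hmin] := compact_EVT_min ne (@simplex_compact m.+1) (continuous_subspaceT hf).
exists a; first by rewrite inE in ha.
by move=> b hb; apply: hmin; rewrite inE.
Qed.
End S.

Section Gen.
Variable R : realType.
Variables (n m : nat) (L : R) (q : 'I_m.+1 -> 'rV[R]_n.+1) (c : 'I_m.+1 -> R).

Definition Sa (a : 'rV[R]_m.+1) : 'rV[R]_n.+1 := \sum_(i < m.+1) a 0 i *: q i.
Definition Ca (a : 'rV[R]_m.+1) : R := \sum_(i < m.+1) a 0 i * c i.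
Definition Vv (y nu : 'rV[R]_n.+1) a := y + nu - Sa a.
Definition ww y nu a := L / 2 * dotv (Vv y nu a) (Vv y nu a) + Ca a.
Definition feas (nu : 'rV[R]_n.+1) (a : 'rV[R]_m.+1) :=
  nonneg_orthant nu /\ simplex a.
Definition WW y := inf [set ww y nu a | nu in @nonneg_orthant R n.+1 & a in @simplex R m.+1].
Definition minimal y nu a :=
  feas nu a /\ forall nu' a', feas nu' a' -> ww y nu a <= ww y nu' a'.

Lemma SaD a b : Sa (a + b) = Sa a + Sa b.
Proof. by rewrite /Sa -big_split; apply: eq_bigr => i _; rewrite mxE scalerDl. Qed.
Lemma SaB a b : Sa (a - b) = Sa a - Sa b.
Proof. by rewrite /Sa -sumrB; apply: eq_bigr => i _; rewrite !mxE scalerBl. Qed.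
Lemma SaZ t a : Sa (t *: a) = t *: Sa a.
Proof. by rewrite /Sa scaler_sumr; apply: eq_bigr => i _; rewrite mxE scalerA. Qed.
Lemma CaD a b : Ca (a + b) = Ca a + Ca b.
Proof. by rewrite /Ca -big_split; apply: eq_bigr => i _; rewrite mxE mulrDl. Qed.
Lemma CaB a b : Ca (a - b) = Ca a - Ca b.
Proof. by rewrite /Ca -sumrB; apply: eq_bigr => i _; rewrite !mxE mulrBl. Qed.
Lemma CaZ t a : Ca (t *: a) = t * Ca a.
Proof. by rewrite /Ca mulr_sumr; apply: eq_bigr => i _; rewrite mxE mulrA. Qed.

Lemma ww_expand y nu a y' nu' a' :
  ww y' nu' a' = ww y nu a
    + (L * dotv (Vv y nu a) (Vv y' nu' a' - Vv y nu a) + (Ca a' - Ca a))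
    + L / 2 * dotv (Vv y' nu' a' - Vv y nu a) (Vv y' nu' a' - Vv y nu a).
Proof.
rewrite /ww; set V := Vv y nu a; set D := Vv y' nu' a' - V.
have -> : Vv y' nu' a' = V + D by rewrite /D addrC subrK.
rewrite (dotv_sq_add V D); move: (dotv V V) (dotv V D) (dotv D D) (Ca a) (Ca a') => x1 x2 x3 x4 x5.
by field.
Qed.

Lemma feas_comb nu a nu' a' t : feas nu a -> feas nu' a' -> 0 <= t -> t <= 1 ->
  feas (nu + t *: (nu' - nu)) (a + t *: (a' - a)).
Proof.
move=> [h1 [h2 h3]] [h1' [h2' h3']] t0 t1; split; [|split].
- move=> j; rewrite !mxE; have := h1 j; have := h1' j; nra.
- move=> j; rewrite !mxE; have := h2 j; have := h2' j; nra.
- under eq_bigr do rewrite !mxE.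
  rewrite big_split /= -mulr_sumr sumrB h3 h3' subrr mulr0 addr0 //.
Qed.

Lemma Vv_comb y nu a nu' a' t :
  Vv y (nu + t *: (nu' - nu)) (a + t *: (a' - a)) - Vv y nu a
  = t *: (Vv y nu' a' - Vv y nu a).
Proof.
rewrite /Vv SaD SaZ SaB; apply/rowP => j; rewrite !mxE; ring.
Qed.

Lemma alg_nonneg (B K : R) : 0 <= K ->
  (forall t, 0 < t -> t <= 1 -> 0 <= t * B + t ^+ 2 * K) -> 0 <= B.
Proof.
move=> K0 H; rewrite leNgt; apply/negP => B0.
have D0 : 0 < K - B by lra.
pose t := - B / (K - B).
have tD : t * (K - B) = - B by rewrite /t divfK // gt_eqF.
have t0 : 0 < t by rewrite /t divr_gt0 // oppr_gt0.
have t1 : t <= 1 by rewrite /t ler_pdivrMr // mul1r; lra.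
have := H t t0 t1.
have -> : t * B + t ^+ 2 * K = t ^+ 2 * B.
  have -> : K = (K - B) + B by ring.
  rewrite expr2 mulrDr -(mulrA t t) tD; ring.
rewrite pmulr_rge0 ?exprn_gt0 //; lra.
Qed.

Lemma opt_cond y nu a nu' a' : 0 < L -> minimal y nu a -> feas nu' a' ->
  0 <= L * dotv (Vv y nu a) (Vv y nu' a' - Vv y nu a) + (Ca a' - Ca a).
Proof.
move=> hL [hf hmin] hf'; set D := Vv y nu' a' - Vv y nu a.
apply: (@alg_nonneg _ (L / 2 * dotv D D)).
  by apply: mulr_ge0; [lra | exact: dotv_ge0].
move=> t t0 t1.
have := hmin _ _ (feas_comb hf hf' (ltW t0) t1).
rewrite (ww_expand y nu a y (nu + t *: (nu' - nu)) (a + t *: (a' - a))) Vv_comb.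
have -> : Ca (a + t *: (a' - a)) - Ca a = t * (Ca a' - Ca a).
  by rewrite CaD CaZ CaB; ring.
rewrite -/D dotvZr dotvZl dotvZr.
move: (dotv (Vv y nu a) D) (dotv D D) (Ca a' - Ca a) => x1 x2 x3 h.
have : 0 <= L * (t * x1) + t * x3 + L / 2 * (t * (t * x2)) by lra.
suff -> : t * (L * x1 + x3) + t ^+ 2 * (L / 2 * x2) = L * (t * x1) + t * x3 + L / 2 * (t * (t * x2)) by [].
ring.
Qed.

Lemma WW_min y nu a : minimal y nu a -> WW y = ww y nu a.
Proof.
move=> [[h1 h2] hmin]; apply/eqP; rewrite eq_le; apply/andP; split.
  apply: ge_inf; last by exists nu => //; exists a.
  exists (ww y nu a) => _ [nu' h1' [a' h2' <-]]; exact: hmin.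
apply: lb_le_inf; first by exists (ww y nu a); exists nu => //; exists a.
by move=> _ [nu' h1' [a' h2' <-]]; apply: hmin.
Qed.


Definition uu (y : 'rV[R]_n.+1) (a : 'rV[R]_m.+1) (j : 'I_n.+1) := y 0 j - \sum_(i < m.+1) a 0 i * q i 0 j.
Definition psi (y : 'rV[R]_n.+1) (a : 'rV[R]_m.+1) := L / 2 * \sum_(j < n.+1) (Num.max (uu y a j) 0 * Num.max (uu y a j) 0) + Ca a.
Definition nustar (y : 'rV[R]_n.+1) (a : 'rV[R]_m.+1) : 'rV[R]_n.+1 := \row_j Num.max 0 (- uu y a j).

Lemma Sa_coord a j : (Sa a) 0 j = \sum_(i < m.+1) a 0 i * q i 0 j.
Proof. by rewrite /Sa summxE; apply: eq_bigr => i _; rewrite mxE. Qed.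

Lemma Vv_coord y nu a j : (Vv y nu a) 0 j = uu y a j + nu 0 j.
Proof. rewrite /Vv !mxE Sa_coord /uu; ring. Qed.

Lemma max_fact (u : R) : u + Num.max 0 (- u) = Num.max u 0.
Proof. rewrite !maxEle; case: ifPn => h1; case: ifPn => h2; rewrite -?ltNge in h1 h2; lra. Qed.

Lemma psi_eq y a : ww y (nustar y a) a = psi y a.
Proof.
rewrite /ww /psi /dotv; congr (_ * _ + _); apply: eq_bigr => j _.
by rewrite Vv_coord mxE max_fact.
Qed.

Lemma psi_le y nu a : 0 < L -> nonneg_orthant nu -> psi y a <= ww y nu a.
Proof.
move=> hL hnu; rewrite /ww /psi lerD2r; apply: ler_wpM2l; first lra.
apply: ler_sum => j _; rewrite Vv_coord; have := hnu j.
move: (nu 0 j) (uu y a j) => v u hv.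
rewrite maxEle; case: ifPn => h; rewrite -?ltNge in h; have := sqr_ge0 (u + v); rewrite expr2; nra.
Qed.

Lemma psi_cont y : continuous (psi y).
Proof.
rewrite /psi; apply: cont_add; last first.
  by rewrite /Ca; apply: cont_sum => i; apply: cont_mul;
    [exact: coord_continuous | exact: cst_continuous].
apply: cont_mul; first exact: cst_continuous.
apply: cont_sum => j.
have hu : continuous (fun a => uu y a j).
  rewrite /uu; apply: cont_sub; first exact: cst_continuous.
  by apply: cont_sum => i; apply: cont_mul;
    [exact: coord_continuous | exact: cst_continuous].
by apply: cont_mul; apply: cont_max => //; exact: cst_continuous.
Qed.

Lemma exists_min y : 0 < L -> exists p : 'rV[R]_n.+1 * 'rV[R]_m.+1, minimal y p.1 p.2.
Proof.
move=> hL; have [a ha hmin] := min_simplex (psi_cont (y := y)).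
exists (nustar y a, a); split.
  by split => // j; rewrite mxE le_max lexx.
move=> nu' a' [h1 h2] /=; rewrite psi_eq.
exact: le_trans (hmin a' h2) (psi_le y a' hL h1).
Qed.

Definition pmin y : 'rV[R]_n.+1 * 'rV[R]_m.+1 :=
  xget (0, 0) (fun p => minimal y p.1 p.2).

Lemma pminP y : 0 < L -> minimal y (pmin y).1 (pmin y).2.
Proof. move=> hL; exact: (xgetPex (0, 0) (exists_min y hL)). Qed.

Definition Gr y := L *: Vv y (pmin y).1 (pmin y).2.

Lemma uniqV y nu a : 0 < L -> minimal y nu a -> Vv y nu a = Vv y (pmin y).1 (pmin y).2.
Proof.
move=> hL hm; have hp := pminP y hL.
move: hp hm; case: (pmin y) => nu0 a0 /= hp hm.
have e : ww y nu a = ww y nu0 a0.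
  by apply/le_anti/andP; split; [exact: hm.2 _ _ hp.1 | exact: hp.2 _ _ hm.1].
have hB := opt_cond hL hp hm.1.
have := ww_expand y nu0 a0 y nu a; rewrite e.
set D := Vv y nu a - Vv y nu0 a0 => hE.
have hD0 := dotv_ge0 D.
have hD : dotv D D = 0.
  apply/le_anti; rewrite hD0 andbT.
  have : L / 2 * dotv D D <= 0 by lra.
  by rewrite pmulr_rle0 // divr_gt0.
by apply/subr0_eq; move/dotv_eq0: hD.
Qed.

Lemma Gr_min y nu a : 0 < L -> minimal y nu a -> Gr y = L *: Vv y nu a.
Proof. by move=> hL hm; rewrite /Gr (uniqV hL hm). Qed.

Lemma WW_ne z : 0 < L -> [set ww z nu a | nu in @nonneg_orthant R n.+1 & a in @simplex R m.+1] !=set0.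
Proof.
move=> hL; have [h1 h2] := (pminP z hL).1.
by exists (ww z (pmin z).1 (pmin z).2); exists (pmin z).1 => //; exists (pmin z).2.
Qed.

Lemma W_lower y z : 0 < L -> WW y + dotv (Gr y) (z - y) <= WW z.
Proof.
move=> hL; have hp := pminP y hL; rewrite (WW_min hp) /Gr.
move: hp; case: (pmin y) => nu0 a0 /= hp.
apply: lb_le_inf; first exact: WW_ne.
move=> _ [nu' h1 [a' h2 <-]].
rewrite (ww_expand y nu0 a0 z nu' a').
have eD : Vv z nu' a' - Vv y nu0 a0 = (z - y) + (Vv y nu' a' - Vv y nu0 a0).
  by rewrite /Vv; apply/rowP => j; rewrite !mxE; ring.
rewrite eD (dotvDr (z - y) (Vv y nu' a' - Vv y nu0 a0) (Vv y nu0 a0)) dotvZl.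
have hB := opt_cond hL hp (conj h1 h2 : feas nu' a').
have := mulr_ge0 (ltW hL) (dotv_ge0 (z - y + (Vv y nu' a' - Vv y nu0 a0))).
move: hB; move: (dotv (z - y + _) _) (dotv (Vv y nu0 a0) (z - y))
  (dotv (Vv y nu0 a0) (Vv y nu' a' - Vv y nu0 a0)) (Ca a' - Ca a0) => Q x1 x2 C hB hD.
have : 0 <= L / 2 * Q by rewrite mulrAC; apply: mulr_ge0 => //; lra.
lra.
Qed.

Lemma W_upper y z : 0 < L ->
  WW z <= WW y + dotv (Gr y) (z - y) + L / 2 * dotv (z - y) (z - y).
Proof.
move=> hL; have hp := pminP y hL; rewrite (WW_min hp) /Gr.
move: hp; case: (pmin y) => nu0 a0 /= hp.
apply: (@le_trans _ _ (ww z nu0 a0)).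
  apply: ge_inf; last by exists nu0; [exact: hp.1.1 | exists a0; [exact: hp.1.2 |]].
  have hz := pminP z hL.
  exists (ww z (pmin z).1 (pmin z).2) => _ [nu' h1' [a' h2' <-]]; exact: hz.2.
rewrite (ww_expand y nu0 a0 z nu0 a0).
have eD : Vv z nu0 a0 - Vv y nu0 a0 = z - y.
  by rewrite /Vv; apply/rowP => j; rewrite !mxE; ring.
by rewrite eD subrr addr0 dotvZl.
Qed.

Definition ek (k : 'I_m.+1) : 'rV[R]_m.+1 := \row_j (if j == k then 1 else 0).

Lemma Sa_ek k : Sa (ek k) = q k.
Proof.
rewrite /Sa (bigD1 k) //= big1 => [|j hj]; rewrite mxE.
  by rewrite eqxx scale1r addr0.
by rewrite (negbTE hj) scale0r.
Qed.

Lemma Ca_ek k : Ca (ek k) = c k.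
Proof.
rewrite /Ca (bigD1 k) //= big1 => [|j hj]; rewrite mxE.
  by rewrite eqxx mul1r addr0.
by rewrite (negbTE hj) mul0r.
Qed.

Lemma feas_ek k : feas 0 (ek k).
Proof.
split; first by move=> j; rewrite mxE.
split; first by move=> j; rewrite mxE; case: ifP.
rewrite (bigD1 k) //= big1 => [|j hj]; rewrite mxE.
  by rewrite eqxx addr0.
by rewrite (negbTE hj).
Qed.

Lemma lower_vertex y g t : 0 < L ->
  (forall j, t <= dotv g (y - q j) + c j - dotv g g / (2 * L)) ->
  (forall nu, nonneg_orthant nu -> 0 <= dotv g nu) ->
  forall nu a, feas nu a -> t <= ww y nu a.
Proof.
move=> hL hj hnu nu a [h1 [h2 h3]].
set V := Vv y nu a.
have key : dotv g V - dotv g g / (2 * L) <= L / 2 * dotv V V.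
  have := dotv_ge0 (L *: V - g).
  rewrite (dotv_sq_sub (L *: V) g) !dotvZl dotvZr (dotvC V g).
  move: (dotv V V) (dotv g V) (dotv g g) => vv gv gg h.
  rewrite -subr_ge0.
  have -> : L / 2 * vv - (gv - gg / (2 * L)) =
     (L * (L * vv) - 2 * (L * gv) + gg) / (2 * L) by field; rewrite gt_eqF.
  by apply: divr_ge0; lra.
have gV : dotv g V = dotv g y + dotv g nu - \sum_(j < m.+1) a 0 j * dotv g (q j).
  rewrite /V /Vv dotvBr dotvDr /Sa dotv_sumr.
  by congr (_ - _); apply: eq_bigr => j _; rewrite dotvZr.
have hsum : \sum_(j < m.+1) a 0 j * t <=
    \sum_(j < m.+1) a 0 j * (dotv g (y - q j) + c j - dotv g g / (2 * L)).
  by apply: ler_sum => j _; apply: ler_wpM2l.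
have et : \sum_(j < m.+1) a 0 j * t = t by rewrite -mulr_suml h3 mul1r.
have eS : \sum_(j < m.+1) a 0 j * (dotv g (y - q j) + c j - dotv g g / (2 * L)) =
    dotv g y - \sum_(j < m.+1) a 0 j * dotv g (q j) + Ca a - dotv g g / (2 * L).
  set K := dotv g g / (2 * L).
  transitivity (\sum_(j < m.+1) a 0 j * dotv g y - \sum_(j < m.+1) a 0 j * dotv g (q j)
     + \sum_(j < m.+1) a 0 j * c j - \sum_(j < m.+1) a 0 j * K).
    rewrite -sumrB -big_split -sumrB /=; apply: eq_bigr => j _.
    rewrite dotvBr; ring.
  by rewrite -!mulr_suml h3 !mul1r.
rewrite et eS in hsum.
have := hnu nu h1.
rewrite /ww -/V.
move: hsum key gV; move: (dotv g V) (dotv g y) (dotv g nu) (\sum_(j < m.+1) a 0 j * dotv g (q j)) (dotv g g / (2 * L)) (L / 2 * dotv V V) (Ca a) => x1 x2 x3 x4 x5 x6 x7.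
lra.
Qed.

End Gen.

Definition dotl (R : realType) n (g : 'rV[R]_n) (h : 'rV[R]_n) : R := dotv g h.

Lemma dotl_lin (R : realType) n (g : 'rV[R]_n) : linear (@dotl R n g).
Proof.
move=> a u v; rewrite /dotl; transitivity (a * dotv g u + dotv g v); last by [].
rewrite /dotv mulr_sumr -big_split; apply: eq_bigr => j _; rewrite !mxE /=; ring.
Qed.

HB.instance Definition _ (R : realType) n (g : 'rV[R]_n) :=
  GRing.isLinear.Build R 'rV[R]_n R *:%R (@dotl R n g) (@dotl_lin R n g).

Section T.
Variable R : realType.
Variable n : nat.

Lemma diff_from_bound (F : 'rV[R]_n.+1 -> R) (y g : 'rV[R]_n.+1) (K : R) :
  0 <= K ->
  (forall h, `|F (h + y) - F y - dotv g h| <= K * `|h| ^+ 2) ->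
  continuous (@dotl R n.+1 g) ->
  is_gradient F y g.
Proof.
move=> K0 hb hc.
have dxf : F \o shift y = cst (F y) + (@dotl R n.+1 g) +o_ (0 : 'rV[R]_n.+1) id.
  apply/eqaddoP => e e0.
  have K1 : 0 < K + 1 by lra.
  apply: filterS (nbhs0_lt (divr_gt0 e0 K1)) => h hh /=.
  have -> : (F \o +%R^~ y - (cst (F y) + dotl g)) h = F (h + y) - F y - dotv g h.
    by rewrite /= opprD addrA.
  apply: (le_trans (hb h)).
  have hn := normr_ge0 h.
  have : `|h| * (K + 1) < e by rewrite -ltr_pdivlMr.
  nra.
have hdf (h0 : 'rV[R]_n.+1 -> R) : (F \o shift y = cst (F y) + h0 +o_ (0:'rV[R]_n.+1) id) ->
    h0 = F \o shift y - cst (F y) +o_ (0:'rV[R]_n.+1) id.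
  move=> hdf; apply: eqaddoE.
  rewrite hdf addrAC -!addrA addrC !addrA subrK.
  rewrite -[LHS]addr0 -addrA; congr (_ + _).
  by apply/eqP; rewrite eq_sym addrC addr_eq0 oppo.
have dF : differentiable F y.
  apply/diffP => /=.
  apply: (@getPex _ (fun (df : {linear 'rV[R]_n.+1 -> R}) => continuous df /\
     forall z, F z = F (lim (nbhs y)) + df (z - lim (nbhs y))
        +o_(z \near y) (z - lim (nbhs y)))).
  pose dl : {linear 'rV[R]_n.+1 -> R} := HB.pack (@dotl R n.+1 g) (GRing.isLinear.Build _ _ _ _ _ (@dotl_lin R n.+1 g)).
  exists dl; split=> //; apply: eqaddoEx => z.
  change (dl (z - lim (nbhs y))) with (@dotl R n.+1 g (z - lim (nbhs y))).
  rewrite (hdf _ dxf) !addrA lim_id // /(_ \o _) /= subrK [F _ + _]addrC addrK.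
  rewrite -addrA -[LHS]addr0; congr (_ + _).
  apply/eqP; rewrite eq_sym addrC addr_eq0 oppox; apply/eqP.
  rewrite [in LHS]littleo_center0 (comp_centerK y id).
  by rewrite -[- _ in RHS](comp_centerK y).
split => // h.
by rewrite (diff_unique hc dxf).
Qed.
End T.

Section Abs.
Variable R : realType.
Variables (n : nat) (L : R) (F : 'rV[R]_n.+1 -> R) (G : 'rV[R]_n.+1 -> 'rV[R]_n.+1).
Hypothesis hL : 0 < L.
Hypothesis hlo : forall y z, F y + dotv (G y) (z - y) <= F z.
Hypothesis hup : forall y z,
  F z <= F y + dotv (G y) (z - y) + L / 2 * dotv (z - y) (z - y).

Lemma dotvNr (u v : 'rV[R]_n.+1) : dotv u (- v) = - dotv u v.
Proof. by rewrite dotvC dotvNl dotvC. Qed.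

Lemma abs_convex : convexf F.
Proof.
move=> y z t t0 t1; set u := t *: y + (1 - t) *: z.
have h1 := hlo u y; have h2 := hlo u z.
have e : t * dotv (G u) (y - u) + (1 - t) * dotv (G u) (z - u) = 0.
  rewrite -!dotvZr -dotvDr.
  have -> : t *: (y - u) + (1 - t) *: (z - u) = 0.
    by rewrite /u; apply/rowP => j; rewrite !mxE; ring.
  exact: dotv0r.
have t1' : 0 <= 1 - t by lra.
have k1 := ler_wpM2l t0 h1; have k2 := ler_wpM2l t1' h2.
move: e k1 k2; move: (dotv (G u) (y - u)) (dotv (G u) (z - u)) (F u) (F y) (F z) => a b fu fy fz.
nra.
Qed.

Lemma abs_coco y z :
  dotv (G y - G z) (G y - G z) / (2 * L) <= F y - F z - dotv (G z) (y - z).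
Proof.
set d := G y - G z; set p := y - L^-1 *: d.
have h1 := hlo z p; have h2 := hup y p.
have e1 : p - z = (y - z) - L^-1 *: d by rewrite /p; apply/rowP => j; rewrite !mxE; ring.
have e2 : p - y = - (L^-1 *: d) by rewrite /p; apply/rowP => j; rewrite !mxE; ring.
rewrite e1 dotvBr dotvZr in h1.
rewrite e2 dotvNl !dotvNr opprK !dotvZr dotvZl in h2.
have ed : L^-1 * dotv (G y) d - L^-1 * dotv (G z) d = L^-1 * dotv d d.
  by rewrite -mulrBr -dotvBl.
have eL : L / 2 * (L^-1 * (L^-1 * dotv d d)) = dotv d d / (2 * L).
  by field; rewrite gt_eqF.
have eL2 : L^-1 * dotv d d - dotv d d / (2 * L) = dotv d d / (2 * L).
  by field; rewrite gt_eqF.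
lra.
Qed.

Lemma abs_lip y z : enorm (G y - G z) <= L * enorm (y - z).
Proof.
have c1 := abs_coco y z; have c2 := abs_coco z y.
set d := G y - G z; set e := y - z.
have ed : G z - G y = - d by rewrite /d opprB.
have ee : z - y = - e by rewrite /e opprB.
rewrite ed ee dotvNl dotvNr opprK dotvNr in c2.
have hde : dotv d e = dotv (G y) e - dotv (G z) e by rewrite dotvBl.
have h2 : dotv d d / L <= dotv d e.
  have -> : dotv d d / L = dotv d d / (2 * L) + dotv d d / (2 * L) by field; rewrite gt_eqF.
  lra.
have h3 : dotv d d <= L * dotv d e.
  by rewrite -ler_pdivrMl // mulrC.
have h4 := dotv_ge0 (d - L *: e).
rewrite (dotv_sq_sub d (L *: e)) dotvZr dotvZl dotvZr in h4.
have key : dotv d d <= L ^+ 2 * dotv e e by nra.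
rewrite /enorm.
have -> : L * Num.sqrt (dotv e e) = Num.sqrt (L ^+ 2 * dotv e e).
  by rewrite sqrtrM ?sqr_ge0 // sqrtr_sqr gtr0_norm.
by rewrite ler_sqrt //; apply: mulr_ge0; [exact: sqr_ge0 | exact: dotv_ge0].
Qed.

Lemma coord_le (h : 'rV[R]_n.+1) j : `|h 0 j| <= `|h|.
Proof.
change (`|h|) with (mx_norm h); rewrite mx_normrE; apply/bigmax_geP; right => /=.
by exists (0, j).
Qed.

Lemma dot_le (h : 'rV[R]_n.+1) : dotv h h <= n.+1%:R * `|h| ^+ 2.
Proof.
rewrite /dotv; apply: (@le_trans _ _ (\sum_(j < n.+1) `|h| ^+ 2)).
  apply: ler_sum => j _; have := coord_le h j; have := normr_ge0 (h 0 j).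
  have : h 0 j * h 0 j <= `|h 0 j| * `|h 0 j| by rewrite -normrM ler_norm.
  by rewrite expr2; nra.
by rewrite sumr_const card_ord mulr_natl.
Qed.

Lemma dotl_cont (g : 'rV[R]_n.+1) : continuous (@dotl R n.+1 g).
Proof.
rewrite /dotl /dotv; apply: cont_sum => j; apply: cont_mul.
  exact: cst_continuous.
exact: coord_continuous.
Qed.

Lemma abs_grad y : is_gradient F y (G y).
Proof.
apply: (@diff_from_bound _ _ _ _ _ (L / 2 * n.+1%:R)).
- by apply: mulr_ge0; [apply: divr_ge0; [exact: ltW | exact: ler0n] | exact: ler0n].
- move=> h; have h1 := hlo y (h + y); have h2 := hup y (h + y).
  rewrite addrK in h1 h2.
  have := dot_le h; have := dotv_ge0 h.
  move: h1 h2; move: (dotv (G y) h) (dotv h h) (F y) (F (h + y)) => a b fy fz h1 h2 hb hb'.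
  rewrite ler_norml; apply/andP; split.
    have : 0 <= L / 2 * n.+1%:R * `|h| ^+ 2.
      apply: mulr_ge0; [apply: mulr_ge0; [apply: divr_ge0; [exact: ltW | exact: ler0n] | exact: ler0n] | exact: sqr_ge0].
    lra.
  have : L / 2 * b <= L / 2 * (n.+1%:R * `|h| ^+ 2) by apply: ler_wpM2l; [apply: divr_ge0; [exact: ltW | exact: ler0n] | exact: hb'].
  rewrite mulrA; lra.
- exact: dotl_cont.
Qed.
End Abs.


Section Conc.
Variable R : realType.
Variables (N : nat) (L : R) (zeta : nat -> R).
Hypothesis hL : 0 < L.
Hypothesis hzeta : forall k : nat, (k <= N.+1)%N -> zeta k.+1 < zeta k.
Hypothesis hzeta0 : zeta N.+2 = 0.

Definition sq k := Num.sqrt (zeta k - zeta k.+1).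

Lemma zeta_mono a d : (a + d <= N.+2)%N -> zeta (a + d) <= zeta a.
Proof.
elim: d => [|d IH] h; first by rewrite addn0.
apply: le_trans (IH _); last by lia.
rewrite addnS; apply: ltW; apply: hzeta; lia.
Qed.

Lemma zeta_le a b : (a <= b)%N -> (b <= N.+2)%N -> zeta b <= zeta a.
Proof. by move=> hab hb; rewrite -(subnKC hab); apply: zeta_mono; rewrite subnKC. Qed.

Lemma zeta_ge0 k : (k <= N.+2)%N -> 0 <= zeta k.
Proof. by move=> hk; rewrite -hzeta0; apply: zeta_le. Qed.

Lemma sq_sq k : (k <= N.+1)%N -> sq k * sq k = zeta k - zeta k.+1.
Proof. by move=> hk; rewrite -expr2 sqr_sqrtr // subr_ge0 ltW // hzeta. Qed.

Lemma sq_pos k : (k <= N.+1)%N -> 0 < sq k.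
Proof. by move=> hk; rewrite sqrtr_gt0 subr_gt0 hzeta. Qed.

Lemma dot_g i v : dotv (gpt N L zeta i) v =
  if (i <= N)%N then L * sq i * v 0 (inord i) else 0.
Proof.
case: ifP => hi.
  rewrite /dotv (bigD1 (inord i)) //= big1 ?addr0.
    by rewrite mxE hi inordK ?ltnS // eqxx.
  move=> j hj; rewrite mxE hi /=.
  case: eqP => [hji|]; last by rewrite mul0r.
  by exfalso; move/negP: hj; apply; apply/eqP/val_inj; rewrite /= inordK ?ltnS.
by rewrite /dotv big1 // => j _; rewrite mxE hi /= mul0r.
Qed.

Definition qq (i : 'I_N.+2) : 'rV[R]_N.+1 := xpt N zeta i - L^-1 *: gpt N L zeta i.
Definition cc (i : 'I_N.+2) : R :=
  fval N L zeta i - (2 * L)^-1 * dotv (gpt N L zeta i) (gpt N L zeta i).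

Lemma ICond (i : nat) (j : 'I_N.+2) : (i <= N.+1)%N ->
  fval N L zeta i <= dotv (gpt N L zeta i) (xpt N zeta i - qq j) + cc j
     - dotv (gpt N L zeta i) (gpt N L zeta i) / (2 * L).
Proof.
move=> hi1; have hj : (j <= N.+1)%N by rewrite -ltnS.
rewrite /cc /qq !dot_g.
have e1 : forall x : R, (2 * L)^-1 * (L * x * (L * x)) = L / 2 * (x * x).
  by move=> x; field; rewrite gt_eqF.
have e2 : forall x : R, L * x * (L * x) / (2 * L) = L / 2 * (x * x).
  by move=> x; field; rewrite gt_eqF.
have hL2 : 0 < L / 2 by rewrite divr_gt0.
case: (leqP i N) => hi /=.
  rewrite !mxE inordK ?ltnS // ltnn eqxx hi /fval hi /= -/(sq i) -/(sq j).
  have Si0 := sq_pos (leqW hi); have Si2 := sq_sq (leqW hi).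
  case: (ltngtP i j) => hij.
  - rewrite andbF mulr0 subr0.
    have hX : L * sq i * (0 - (- ((zeta i - zeta j.+1) / sq i))) = L * (zeta i - zeta j.+1).
      by field; rewrite gt_eqF.
    rewrite hX.
    case: (leqP j N) => hjN /=.
      rewrite inordK ?ltnS // eqxx /= -/(sq j) e1 e2 sq_sq // Si2.
      have := ler_wpM2l (ltW hL2) (lexx 0).
      nra.
    have ejN : (j : nat) = N.+1 by lia.
    rewrite e2 Si2 ejN hzeta0 mulr0 subr0.
    have := ler_wpM2l (ltW hL2) (lexx 0); nra.
  - have hjN : (j <= N)%N by lia.
    rewrite andbF mulr0 !subr0 mulr0 add0r hjN.
    rewrite inordK ?ltnS // eqxx /= -/(sq j) e1 e2 sq_sq // Si2.
    have hz : zeta i <= zeta j.+1 by apply: zeta_le; lia.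
    have := ler_wpM2l (ltW hL2) hz.
    nra.
  - rewrite -hij hi /= inordK ?ltnS // eqxx /= -/(sq i) e1 e2 Si2.
    have eS : L * sq i * (0 - (0 - L^-1 * (L * sq i))) = L * (sq i * sq i).
      by field; rewrite gt_eqF.
    rewrite eS Si2; nra.
rewrite /fval leqNgt hi /= mul0r add0r subr0.
case: (leqP j N) => hjN /=; last by rewrite mulr0 subr0.
rewrite mxE hjN inordK ?ltnS // eqxx /= -/(sq j) e1 sq_sq ?(leqW hjN) //.
have hz : 0 <= zeta j.+1 by apply: zeta_ge0; lia.
have := mulr_ge0 (ltW hL2) hz.
nra.
Qed.

Lemma g_orth (i : nat) nu : nonneg_orthant nu -> 0 <= dotv (gpt N L zeta i) nu.
Proof.
move=> hnu; rewrite dot_g; case: ifP => // hi.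
apply: mulr_ge0; last exact: hnu.
by apply: mulr_ge0; [exact: ltW | exact: sqrtr_ge0].
Qed.

Lemma vertex_V (i : nat) : (i <= N.+1)%N ->
  Vv qq (xpt N zeta i) 0 (ek R (inord i : 'I_N.+2)) = L^-1 *: gpt N L zeta i.
Proof.
move=> hi; rewrite /Vv Sa_ek /qq inordK ?ltnS //.
by apply/rowP => j; rewrite !mxE; ring.
Qed.

Lemma vertex_val (i : nat) : (i <= N.+1)%N ->
  ww L qq cc (xpt N zeta i) 0 (ek R (inord i : 'I_N.+2)) = fval N L zeta i.
Proof.
move=> hi; rewrite /ww Ca_ek vertex_V // /cc inordK ?ltnS // dotvZl dotvZr.
by field; rewrite gt_eqF.
Qed.

Lemma vertex_min (i : nat) : (i <= N.+1)%N ->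
  minimal L qq cc (xpt N zeta i) 0 (ek R (inord i : 'I_N.+2)).
Proof.
move=> hi; split; first exact: feas_ek.
move=> nu a hf; rewrite vertex_val //.
apply: (lower_vertex hL _ _ hf).
  by move=> j; apply: ICond.
by move=> nu' hnu'; apply: g_orth.
Qed.
End Conc.

Theorem corollary1 (R : realType) (N : nat) (L : R) (zeta : nat -> R)
  (hN : (0 < N)%N) (hL : 0 < L)
  (hzeta : forall k : nat, (k <= N.+1)%N -> zeta k.+1 < zeta k)
  (hzeta0 : zeta N.+2 = 0) :
  convexf (@Wfun R N L zeta) /\
  exists G : 'rV[R]_N.+1 -> 'rV[R]_N.+1,
    (forall y, is_gradient (@Wfun R N L zeta) y (G y)) /\
    (forall y z, enorm (G y - G z) <= L * enorm (y - z)) /\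
    (forall i : nat, (i <= N.+1)%N ->
       @Wfun R N L zeta (@xpt R N zeta i) = @fval R N L zeta i /\
       G (@xpt R N zeta i) = @gpt R N L zeta i).
Proof.
have eW : @Wfun R N L zeta = WW L (@qq R N L zeta) (@cc R N L zeta) by [].
rewrite eW.
set F := WW L _ _; pose G := Gr L (@qq R N L zeta) (@cc R N L zeta).
have hlo : forall y z, F y + dotv (G y) (z - y) <= F z.
  by move=> y z; apply: W_lower.
have hup : forall y z, F z <= F y + dotv (G y) (z - y) + L / 2 * dotv (z - y) (z - y).
  by move=> y z; apply: W_upper.
split; first exact: abs_convex hlo.
exists G; split; first by move=> y; exact: (abs_grad hL hlo hup).
split; first by move=> y z; exact: (abs_lip hL hlo hup).
move=> i hi; have hm := vertex_min hL hzeta hzeta0 hi.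
split; first by rewrite /F (WW_min hm) vertex_val.
rewrite /G (Gr_min hL hm) vertex_V // scalerA mulfV ?scale1r //.
by rewrite gt_eqF.
Qed.
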